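(* Let $\Phi$ be a Leonard system in $\mathcal A$ with parameter array $(\theta_i,\theta^*_i,i=0..d;\varphi_j,\phi_j,j=1..d)$ and scalars $k_i$ as defined below. Then $$k_i=\frac{\varphi_1\varphi_2\cdots\varphi_i}{\phi_1\phi_2\cdots\phi_i}\cdot\frac{\eta^*_d(\theta^*_0)}{\tau^*_i(\theta^*_i)\,\eta^*_{d-i}(\theta^*_i)}\qquad(0\le i\le d).$$
   Context: Let $\mathbb K$ be a field, $d\ge 0$ an integer, and $\mathcal A$ a $\mathbb K$-algebra isomorphic to $\mathrm{Mat}_{d+1}(\mathbb K)$, with identity $I$ and trace $\mathrm{tr}$. An element $A\in\mathcal A$ is multiplicity-free if it has $d+1$ mutually distinct eigenvalues in $\mathbb K$; if $\theta_0,\dots,\theta_d$ is an ordering of them, the primitive idempotent of $A$ associated with $\theta_i$ is $E_i=\prod_{j\ne i}(A-\theta_jI)/(\theta_i-\theta_j)$. A Leonard system in $\mathcal A$ is a sequence $\Phi=(A;A^*;\{E_i\}_{i=0}^d;\{E^*_i\}_{i=0}^d)$ such that: (i) $A,A^*$ are multiplicity-free; (ii) $E_0,\dots,E_d$ is an ordering of the primitive idempotents of $A$; (iii) $E^*_0,\dots,E^*_d$ is an ordering of those of $A^*$; (iv) $E_iA^*E_j=0$ if $|i-j|>1$ and $\ne0$ if $|i-j|=1$ $(0\le i,j\le d)$; (v) $E^*_iAE^*_j=0$ if $|i-j|>1$ and $\neq0$ if $|i-j|=1$ $(0\le i,j\le d)$. $\theta_i$ (resp. $\theta^*_i$) is the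 eigenvalue of $A$ (resp. $A^*$) for $E_i$ (resp. $E^*_i$). Define $\nu=\mathrm{tr}(E_0E^*_0)^{-1}$ (the trace is nonzero) and $k_i=\nu\,\mathrm{tr}(E^*_iE_0)$ $(0\le i\le d)$. It is known that there exist unique nonzero scalars $\varphi_1,\dots,\varphi_d\in\mathbb K$ (first split sequence) such that for some $\mathbb K$-algebra isomorphism $\natural:\mathcal A\to\mathrm{Mat}_{d+1}(\mathbb K)$, $A^\natural$ is lower bidiagonal with diagonal $\theta_0,\dots,\theta_d$ and subdiagonal entries all $1$, and $A^{*\natural}$ is upper bidiagonal with diagonal $\theta^*_0,\dots,\theta^*_d$ and $(A^{*\natural})_{i-1,i}=\varphi_i$. The second split sequence $\phi_1,\dots,\phi_d$ is the first split sequence of $(A;A^*;\{E_{d-i}\}_{i=0}^d;\{E^*_i\}_{i=0}^d)$. Polynomials: $\tau^*_i=\prod_{h=0}^{i-1}(\lambda-\theta^*_h)$, $\eta^*_i=\prod_{h=0}^{i-1}(\lambda-\theta^*_{d-h})$. Empty products equal $1$. *)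

(* Defs.v *)
From HB Require Import structures.
From mathcomp Require Import all_boot all_order all_algebra.
Set Implicit Arguments. Unset Strict Implicit. Unset Printing Implicit Defensive.
Import Order.TTheory GRing.Theory Num.Theory.
Local Open Scope ring_scope.

Section LS.
Variable K : fieldType.
Variable d : nat.
Local Notation n := d.+1.

(* the algebra A is taken to be Mat_{d+1}(K) itself; sequences indexed by nat *)

Definition prim_idem (A : 'M[K]_n) (th : nat -> K) (i : nat) : 'M[K]_n :=
  \prod_(j < n | val j != i) ((th i - th j)^-1 *: (A - (th j)%:M)).

(* th_0..th_d is an ordering of d+1 mutually distinct eigenvalues of A
   (so A is multiplicity-free and th determines an ordering E_0..E_d of its
   primitive idempotents) *)
Definition eig_ordering (A : 'M[K]_n) (th : nat -> K) : Prop :=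
  (forall i j : 'I_n, th i = th j -> i = j) /\
  (forall i : 'I_n, eigenvalue A (th i)).

Definition tridiag_rel (A : 'M[K]_n) (th : nat -> K) (B : 'M[K]_n) : Prop :=
  forall i j : 'I_n,
    ((i.+1 < j)%N \/ (j.+1 < i)%N ->
       prim_idem A th i * B * prim_idem A th j = 0) /\
    ((i.+1 = j)%N \/ (j.+1 = i)%N ->
       prim_idem A th i * B * prim_idem A th j != 0).

(* Leonard system (A; A*; {E_i}; {E*_i}), with E_i = prim_idem A th i and
   E*_i = prim_idem As ths i *)
Definition leonard_system (A As : 'M[K]_n) (th ths : nat -> K) : Prop :=
  [/\ eig_ordering A th, eig_ordering As ths,
      tridiag_rel A th As & tridiag_rel As ths A].

Definition alg_iso (f : 'M[K]_n -> 'M[K]_n) : Prop :=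
  [/\ bijective f,
      forall (a : K) (x y : 'M[K]_n), f (a *: x + y) = a *: f x + f y,
      forall x y : 'M[K]_n, f (x * y) = f x * f y
    & f 1 = 1].

Definition first_split_seq (A As : 'M[K]_n) (th ths phi : nat -> K) : Prop :=
  (forall j, (1 <= j <= d)%N -> phi j != 0) /\
  exists f, alg_iso f /\
    f A = \matrix_(i, j) (if val i == val j then th i
                          else if val i == (val j).+1 then 1 else 0) /\
    f As = \matrix_(i, j) (if val i == val j then ths i
                           else if val j == (val i).+1 then phi j else 0).

Definition tau_s (ths : nat -> K) (i : nat) : {poly K} :=
  \prod_(h < i) ('X - (ths h)%:P).
Definition eta_s (ths : nat -> K) (i : nat) : {poly K} :=
  \prod_(h < i) ('X - (ths (d - h)%N)%:P).

Definition nu_LS (A As : 'M[K]_n) (th ths : nat -> K) : K :=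
  (\tr (prim_idem A th 0 * prim_idem As ths 0))^-1.
Definition k_LS (A As : 'M[K]_n) (th ths : nat -> K) (i : nat) : K :=
  nu_LS A As th ths * \tr (prim_idem As ths i * prim_idem A th 0).

End LS.

(* Main.v *)
Require Import Defs.
From HB Require Import structures.
From mathcomp Require Import all_boot all_order all_algebra.
Import Order.TTheory GRing.Theory Num.Theory.
Local Open Scope ring_scope.
From mathcomp Require Import zify ring.
Set Implicit Arguments. Unset Strict Implicit. Unset Printing Implicit Defensive.
Import Order.TTheory GRing.Theory Num.Theory.
Local Open Scope ring_scope.

Section Gen.
Variable K : fieldType.
Variable d : nat.
Local Notation n := d.+1.

Definition lag (th : nat -> K) (i : nat) : {poly K} :=
  \prod_(j < n | val j != i) ((th i - th j)^-1 *: ('X - (th j)%:P)).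

Lemma prim_idemE (M : 'M[K]_n) th i : prim_idem M th i = horner_mx M (lag th i).
Proof.
rewrite /prim_idem /lag rmorph_prod; apply: eq_bigr => j _.
by rewrite /= horner_mxZ rmorphB /= horner_mx_X horner_mx_C.
Qed.

Lemma lag_horner th i x :
  (lag th i).[x] = \prod_(j < n | val j != i) ((th i - th j)^-1 * (x - th j)).
Proof.
rewrite /lag horner_prod; apply: eq_bigr => j _.
by rewrite hornerZ hornerXsubC.
Qed.

Lemma horner_mx_tr (M : 'M[K]_n) p : (horner_mx M p)^T = horner_mx M^T p.
Proof.
elim/poly_ind: p => [|p c IH]; first by rewrite !rmorph0 trmx0.
rewrite !rmorphD !rmorphM /= !horner_mx_X !horner_mx_C linearD /= tr_scalar_mx.
rewrite -mulmxE trmx_mul IH; congr (_ + _).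
have h : horner_mx M^T ('X * p) = horner_mx M^T (p * 'X) by rewrite mulrC.
by move: h; rewrite !rmorphM /= horner_mx_X.
Qed.

End Gen.

Section UBD.
Variable K : fieldType.
Variable d : nat.
Local Notation n := d.+1.
Variables t ph : nat -> K.

Definition ubd : 'M[K]_n := \matrix_(i, j)
  (if val i == val j then t i else if val j == (val i).+1 then ph j else 0).

Lemma ubdBE c (i j : 'I_n) : (ubd - c%:M) i j =
  if val i == val j then t i - c else if val j == (val i).+1 then ph j else 0.
Proof.
rewrite !mxE; case: (altP (i =P j)) => [->|ne]; first by rewrite eqxx.
have -> : (val i == val j) = false by apply/negbTE; rewrite val_eqE.
by rewrite /= subr0.
Qed.

Lemma mulUl (M : 'M[K]_n) c (k b : 'I_n) :
  ((ubd - c%:M) *m M) k b = (t k - c) * M k b +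
    (if (k.+1 < n)%N then ph k.+1 * M (inord k.+1) b else 0).
Proof.
rewrite mxE (bigD1 k) //= ubdBE eqxx; congr (_ + _).
case: ifP => hk.
  have hne : inord k.+1 != k :> 'I_n.
    by rewrite -val_eqE /= inordK // gtn_eqF.
  rewrite (bigD1 (inord k.+1)) //= ubdBE /= inordK // (ltn_eqF (ltnSn k)) eqxx /=.
  rewrite big1 ?addr0 // => r /andP[rk rk1].
  rewrite ubdBE val_eqE eq_sym (negbTE rk).
  have -> : (val r == k.+1) = false.
    by apply/negbTE; apply: contra rk1 => /eqP e; apply/eqP/val_inj; rewrite /= e inordK.
  by rewrite mul0r.
rewrite big1 // => r rk; rewrite ubdBE val_eqE eq_sym (negbTE rk).
have -> : (val r == k.+1) = false.
  by apply/negbTE/eqP => e; move: (ltn_ord r); rewrite e hk.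
by rewrite mul0r.
Qed.

Lemma mulUr (M : 'M[K]_n) c (a k : 'I_n) :
  (M *m (ubd - c%:M)) a k = M a k * (t k - c) +
    (if (0 < k)%N then M a (inord k.-1) * ph k else 0).
Proof.
rewrite mxE (bigD1 k) //= ubdBE eqxx; congr (_ + _).
case: ifP => hk.
  have hk1 : (k.-1 < n)%N by rewrite (leq_ltn_trans (leq_pred _)).
  have hne : inord k.-1 != k :> 'I_n.
    by rewrite -val_eqE /= inordK // ltn_eqF // ltn_predL.
  rewrite (bigD1 (inord k.-1)) //= ubdBE /= inordK // ltn_eqF ?ltn_predL //.
  rewrite prednK // eqxx /=.
  rewrite big1 ?addr0 // => r /andP[rk rk1].
  rewrite ubdBE val_eqE (negbTE rk).
  have -> : (val k == (val r).+1) = false.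
    apply/negbTE; apply: contra rk1 => /eqP e; apply/eqP/val_inj.
    by rewrite /= inordK // e.
  by rewrite mulr0.
rewrite big1 // => r rk; rewrite ubdBE val_eqE (negbTE rk).
have -> : (val k == (val r).+1) = false.
  by apply/negbTE/eqP => e; move: hk; rewrite e.
by rewrite mulr0.
Qed.

Lemma ubd0 : ubd = ubd - 0%:M.
Proof. by apply/matrixP => i j; rewrite !mxE mul0rn subr0. Qed.

Lemma horner_ubd_mulX p :
  horner_mx ubd (p * 'X) = horner_mx ubd p *m (ubd - 0%:M).
Proof. by rewrite rmorphM /= horner_mx_X -ubd0. Qed.

Lemma horner_ubd_trig p :
  (forall i j : 'I_n, (j < i)%N -> horner_mx ubd p i j = 0) /\
  (forall i : 'I_n, horner_mx ubd p i i = p.[t i]).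
Proof.
elim/poly_ind: p => [|p c [IH1 IH2]].
  by split=> *; rewrite rmorph0 ?mxE ?horner0.
rewrite rmorphD /= horner_ubd_mulX horner_mx_C; split.
  move=> i j ji; rewrite mxE mulUr IH1 // mul0r add0r !mxE.
  have -> : (i == j) = false by apply/negbTE; rewrite -val_eqE /= gtn_eqF.
  case: ifP => hj; last by rewrite addr0.
  by rewrite IH1 ?mul0r ?addr0 // inordK ?(leq_ltn_trans (leq_pred _)) //
     (leq_ltn_trans (leq_pred _)).
move=> i; rewrite mxE mulUr IH2 !mxE eqxx hornerD hornerMX hornerC subr0.
case: ifP => hi; last by rewrite addr0.
have h1 : (i.-1 < n)%N by rewrite (leq_ltn_trans (leq_pred _)).
by rewrite IH1 ?mul0r ?addr0 // inordK // ltn_predL.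
Qed.

Lemma factorU p x : p.[x] = 0 -> exists q : {poly K},
  [/\ horner_mx ubd p = (ubd - x%:M) *m horner_mx ubd q,
      horner_mx ubd p = horner_mx ubd q *m (ubd - x%:M) &
      forall y, p.[y] = q.[y] * (y - x)].
Proof.
move=> /rootP /factor_theorem [q ->]; exists q; split.
- by rewrite mulrC rmorphM /= rmorphB /= horner_mx_X horner_mx_C.
- by rewrite rmorphM /= rmorphB /= horner_mx_X horner_mx_C.
- by move=> y; rewrite hornerM hornerXsubC.
Qed.

Hypothesis tinj : forall a b, (a <= d)%N -> (b <= d)%N -> t a = t b -> a = b.

Lemma vanish_div p q x r : (forall y, p.[y] = q.[y] * (y - t x)) ->
  p.[t r] = 0 -> (r <= d)%N -> (x <= d)%N -> r != x -> q.[t r] = 0.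
Proof.
move=> hpq hp hr hx rx; move: hp; rewrite hpq => /eqP; rewrite mulf_eq0 => /orP[/eqP //|].
rewrite subr_eq0 => /eqP /tinj; rewrite hr hx => /(_ isT isT) e.
by move: rx; rewrite e eqxx.
Qed.

Lemma row_kill m (k : 'I_n) p : (d - k)%N = m ->
  (forall r, (k <= r <= d)%N -> p.[t r] = 0) ->
  forall l, horner_mx ubd p k l = 0.
Proof.
elim: m k p => [|m IH] k p hm hp l;
  have hk : (k <= k <= d)%N by rewrite leqnn -ltnS ltn_ord.
all: have [q [h1 _ hq]] := factorU (hp k hk).
all: rewrite h1 mulUl subrr mul0r add0r; case: ifP => // hk1.
  by exfalso; move: hm hk1; lia.
have hk1' : (k.+1 <= d)%N by [].
rewrite (IH (inord k.+1) q) ?mulr0 // ?inordK //; first by move: hm; lia.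
move=> r /andP[hr1 hr2].
apply: (vanish_div hq (hp r _)) => //.
- by rewrite hr2 ltnW.
- by rewrite -ltnS ltn_ord.
- by rewrite gtn_eqF.
Qed.

Lemma col_kill m (k : 'I_n) p : val k = m ->
  (forall r, (r <= k)%N -> p.[t r] = 0) ->
  forall l, horner_mx ubd p l k = 0.
Proof.
elim: m k p => [|m IH] k p hm hp l;
  have hk : (k <= k)%N by [].
all: have [q [_ h1 hq]] := factorU (hp k hk).
all: rewrite h1 mulUr subrr mulr0 add0r; case: ifP => // hk1.
  by move: hk1; rewrite hm.
have hk2 : (k.-1 < n)%N by rewrite (leq_ltn_trans (leq_pred _)).
rewrite (IH (inord k.-1) q) ?mul0r //; first by rewrite /= inordK // hm.
move=> r; rewrite inordK // => hr; apply: (vanish_div hq (hp r _)) => //.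
- by rewrite (leq_trans hr) // leq_pred.
- by rewrite (leq_trans hr) // (leq_trans (leq_pred _)) // -ltnS ltn_ord.
- by rewrite -ltnS ltn_ord.
- by rewrite ltn_eqF // (leq_ltn_trans hr) // ltn_predL hm.
Qed.

Lemma alg1 (a b c f e : K) : e != 0 -> a * b / c * f = a * f * (b * e) / (c * e).
Proof. move=> e0; rewrite invfM; set ci := c^-1; field. exact: e0. Qed.

Lemma alg2 (a b c f e : K) : e != 0 -> f * (a * b / c) = f * a * (b * e) / (e * c).
Proof. move=> e0; rewrite invfM; set ci := c^-1; field. exact: e0. Qed.

Lemma prod_last_cond (F : nat -> K) a b s : (a <= b)%N ->
  \prod_(a <= r < b.+1 | r != s) F r =
  (\prod_(a <= r < b | r != s) F r) * (if b != s then F b else 1).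
Proof.
move=> ab; rewrite (big_cat_nat ab (leqnSn b)) /=; congr (_ * _).
by rewrite big_mkcond big_nat1.
Qed.

Lemma corner m (k i : 'I_n) s p : (i - k)%N = m -> (k <= s <= i)%N ->
  (forall r, (k <= r <= i)%N -> r != s -> p.[t r] = 0) ->
  horner_mx ubd p k i = (\prod_(k.+1 <= r < i.+1) ph r) * p.[t s] /
     \prod_(k <= r < i.+1 | r != s) (t s - t r).
Proof.
elim: m k i s p => [|m IH] k i s p hm /andP[hs1 hs2] hp.
  have ei : (i : nat) = k by move: hm hs1 hs2; lia.
  have es : s = k by move: hm hs1 hs2; lia.
  have -> : i = k by apply: val_inj.
  rewrite es big_geq // prod_last_cond // big_geq // eqxx mul1r !mulr1 invr1 mulr1.
  by case: (horner_ubd_trig p) => _ ->.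
have hki : (k < i)%N by move: hm; lia.
have hsd : (s <= d)%N by move: hs2 (ltn_ord i); lia.
have hkd : (k <= d)%N by rewrite -ltnS ltn_ord.
have hid : (i <= d)%N by rewrite -ltnS ltn_ord.
case: (eqVneq s k) => [esk|nsk].
-
  have hi0 : (0 < i)%N by move: hki; lia.
  have hi1 : (i.-1 < n)%N by rewrite (leq_ltn_trans (leq_pred _)).
  have hpi : p.[t i] = 0.
    by apply: hp; rewrite ?(ltnW hki) ?leqnn // esk gtn_eqF.
  have [q [_ h1 hq]] := factorU hpi.
  rewrite h1 mulUr subrr mulr0 add0r hi0.
  rewrite (IH k (inord i.-1) s q); first last.
  + move=> r; rewrite /= inordK // => /andP[hr1 hr2] hrs.
    apply: (vanish_div hq (hp r _ hrs)) => //.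
    * by rewrite hr1 (leq_trans hr2) // leq_pred.
    * by rewrite (leq_trans hr2) // (leq_trans (leq_pred _)).
    * by rewrite ltn_eqF // (leq_ltn_trans hr2) // ltn_predL.
  + by rewrite /= inordK // esk leqnn /=; move: hki; lia.
  + by rewrite /= inordK //; move: hm; lia.
  rewrite /= inordK // prednK // big_nat_recr /=; last by [].
  rewrite prod_last_cond; last by rewrite ltnW.
  have -> : ((i:nat) != s) by rewrite esk gtn_eqF.
  rewrite hq; apply: alg1; rewrite subr_eq0; apply/eqP => /tinj.
  by rewrite esk hkd hid => /(_ isT isT) eki; move: hki; rewrite eki ltnn.
-
  have hks : (k < s)%N by rewrite ltn_neqAle eq_sym nsk hs1.
  have hk1 : (k.+1 < n)%N by rewrite (leq_ltn_trans hki).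
  have hpk : p.[t k] = 0.
    by apply: hp; rewrite ?leqnn ?(ltnW hki) // ltn_eqF.
  have [q [h1 _ hq]] := factorU hpk.
  rewrite h1 mulUl subrr mul0r add0r hk1.
  rewrite (IH (inord k.+1) i s q); first last.
  + move=> r; rewrite /= inordK // => /andP[hr1 hr2] hrs.
    apply: (vanish_div hq (hp r _ hrs)) => //.
    * by rewrite hr2 ltnW.
    * by rewrite (leq_trans hr2).
    * by rewrite gtn_eqF.
  + by rewrite /= inordK // hks hs2.
  + by rewrite /= inordK //; move: hm; lia.
  rewrite /= inordK // (big_ltn (m:=k.+1)) // (big_ltn_cond (m:=k)) //=.
  have -> : ((k:nat) != s) by rewrite ltn_eqF.
  rewrite hq; apply: alg2; rewrite subr_eq0; apply/eqP => /tinj.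
  by rewrite hkd hsd => /(_ isT isT) eks; move: hks; rewrite eks ltnn.
by rewrite ltnW.
Qed.

Lemma rank1 (r i j : 'I_n) p : (r <= i <= j)%N ->
  (forall m, (r <= m <= j)%N -> m != i -> p.[t m] = 0) ->
  horner_mx ubd p r j * p.[t i] = horner_mx ubd p r i * horner_mx ubd p i j.
Proof.
move=> /andP[ri ij] hp.
rewrite (corner (erefl _) (s:=i)); last 2 first.
- by rewrite ri (leq_trans ij).
- by [].
rewrite (corner (erefl _) (s:=i) (k:=r) (i:=i)); last 2 first.
- by rewrite ri leqnn.
- by move=> m /andP[h1 h2] hm; apply: hp => //; rewrite h1 (leq_trans h2).
rewrite (corner (erefl _) (s:=i) (k:=i) (i:=j)); last 2 first.
- by rewrite ij leqnn.
- by move=> m /andP[h1 h2] hm; apply: hp => //; rewrite h2 (leq_trans ri).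
rewrite (big_cat_nat (n:=i.+1)) //= (big_cat_nat (n:=i.+1) (P := fun m => m != i)) //=;
  last by rewrite (leq_trans ri).
rewrite [X in _ = _ * (_ / X)](big_ltn_cond (m:=i)) // eqxx.
rewrite !invfM; set a := (\prod_(_ <= _ < _ | _) _)^-1; set b := (\prod_(_ <= _ < _ | _) _)^-1.
ring.
Qed.

Lemma ubd_pow i :
  (forall r : 'I_n, (i < r)%N -> (ubd ^+ i) ord0 r = 0) /\
  (forall r : 'I_n, val r = i -> (ubd ^+ i) ord0 r = \prod_(1 <= m < i.+1) ph m).
Proof.
elim: i => [|i [IH1 IH2]].
  split=> r hr; rewrite expr0 mxE.
    by rewrite -val_eqE /= eq_sym gtn_eqF.
  by rewrite -val_eqE /= hr eqxx big_geq.
rewrite exprSr -mulmxE; split=> r hr; rewrite {2}ubd0 mulUr subr0.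
  rewrite IH1 ?mul0r ?add0r; last by rewrite ltnW.
  have hr0 : (0 < r)%N by rewrite (leq_trans _ hr).
  have hr1 : (r.-1 < n)%N by rewrite (leq_ltn_trans (leq_pred _)).
  by rewrite hr0 IH1 ?mul0r // inordK // -ltnS prednK.
have hr0 : (0 < r)%N by rewrite hr.
have hr1 : (r.-1 < n)%N by rewrite (leq_ltn_trans (leq_pred _)).
rewrite IH1 ?mul0r ?add0r; last by rewrite hr.
have hi : (i < n)%N by move: hr1; rewrite hr.
rewrite hr0 IH2 ?inordK // ?hr.
  by rewrite [RHS]big_nat_recr.
  by rewrite /= inordK.
Qed.

End UBD.
Section Tr.
Variable K : fieldType.
Variable n : nat.

Lemma sum_single (F : 'I_n -> K) a : (forall j, j != a -> F j = 0) ->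
  \sum_j F j = F a.
Proof. by move=> h; rewrite (bigD1 a) //= big1 ?addr0. Qed.

Lemma mulmx_rowsupp (X B : 'M[K]_n) a r c :
  (forall k l, k != a -> B k l = 0) -> (X *m B) r c = X r a * B a c.
Proof.
move=> hB; rewrite mxE (sum_single (a:=a)) // => j hj; by rewrite hB ?mulr0.
Qed.

Lemma tr_GL1 (X B C : 'M[K]_n) a b :
  (forall k l, k != a -> B k l = 0) -> (forall k l, k != b -> C k l = 0) ->
  \tr (X *m B *m C) = B a b * (C *m X) b a.
Proof.
move=> hB hC; rewrite mxtrace_mulC /mxtrace (sum_single (a:=b)); last first.
  by move=> j hj; rewrite mxE big1 // => r _; rewrite hC ?mul0r.
rewrite mxE [(C *m X) b a]mxE big_distrr /=.
by apply: eq_bigr => j _; rewrite (mulmx_rowsupp _ _ _ hB); ring.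
Qed.

Lemma tr_GL2 (X B C : 'M[K]_n) a b :
  (forall k l, k != a -> B k l = 0) -> (forall l k, k != b -> C l k = 0) ->
  \tr (X *m B *m C) = X b a * (B *m C) a b.
Proof.
move=> hB hC; rewrite /mxtrace (sum_single (a:=b)); last first.
  by move=> j hj; rewrite mxE big1 // => r _; rewrite hC ?mulr0.
rewrite mxE [X in _ = _ * X]mxE big_distrr /=.
by apply: eq_bigr => j _; rewrite (mulmx_rowsupp _ _ _ hB) mulrA.
Qed.

Lemma tr_GL3 (Y C : 'M[K]_n) b :
  (forall k l, k != b -> C k l = 0) -> \tr (Y *m C) = (C *m Y) b b.
Proof.
move=> hC; rewrite mxtrace_mulC /mxtrace (sum_single (a:=b)) // => j hj.
by rewrite mxE big1 // => r _; rewrite hC ?mul0r.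
Qed.

End Tr.

Section Iso.
Variable K : fieldType.
Variable d : nat.
Local Notation n := d.+1.
Variable f : 'M[K]_n -> 'M[K]_n.
Hypothesis hf : alg_iso f.

Lemma fD x y : f (x + y) = f x + f y.
Proof. by case: hf => _ h _ _; have := h 1 x y; rewrite !scale1r. Qed.
Lemma f0 : f 0 = 0.
Proof. by apply: (addrI (f 0)); rewrite addr0 -fD addr0. Qed.
Lemma fZ a x : f (a *: x) = a *: f x.
Proof. by case: hf => _ h _ _; rewrite -[a *: x]addr0 h f0 !addr0. Qed.
Lemma fM x y : f (x * y) = f x * f y.
Proof. by case: hf. Qed.
Lemma f1 : f 1 = 1.
Proof. by case: hf. Qed.
Lemma fN x : f (- x) = - f x.
Proof. by rewrite -scaleN1r fZ scaleN1r. Qed.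
Lemma fB x y : f (x - y) = f x - f y.
Proof. by rewrite fD fN. Qed.
Lemma fC a : f a%:M = a%:M.
Proof. by rewrite -scalemx1 fZ -[1%:M]/(1 : 'M[K]_n) f1 scalemx1. Qed.
Lemma fX x i : f (x ^+ i) = f x ^+ i.
Proof. by elim: i => [|i IH]; rewrite ?expr0 ?f1 // !exprS fM IH. Qed.

Lemma f_prim_idem M th i : f (prim_idem M th i) = prim_idem (f M) th i.
Proof.
rewrite /prim_idem (big_morph f fM f1); apply: eq_bigr => j _.
by rewrite fZ fB fC.
Qed.

Lemma f_sum I (r : seq I) (P : pred I) (F : I -> 'M[K]_n) :
  f (\sum_(i <- r | P i) F i) = \sum_(i <- r | P i) f (F i).
Proof. exact: (big_morph f fD f0). Qed.

Lemma tr_delta00 : \tr (delta_mx 0 0 : 'M[K]_n) = 1.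
Proof.
rewrite /mxtrace (sum_single (a:=0)) ?mxE ?eqxx // => j hj.
by rewrite mxE (negbTE hj).
Qed.

Lemma f_trace : exists c : K, c != 0 /\ forall x, \tr (f x) = c * \tr x.
Proof.
set c := \tr (f (delta_mx 0 0)).
have hd : forall i j : 'I_n, \tr (f (delta_mx i j)) = c *+ (i == j).
  move=> i j; rewrite -(mul_delta_mx (0 : 'I_n)) mulmxE fM mxtrace_mulC mulmxE -fM.
  rewrite -mulmxE mul_delta_mx_cond.
  case: (i =P j) => [->|/eqP ne]; first by rewrite eqxx mulr1n.
  by rewrite eq_sym (negbTE ne) mulr0n f0 mxtrace0.
have htr : forall x, \tr (f x) = c * \tr x.
  move=> x; rewrite {1}(matrix_sum_delta x) f_sum raddf_sum.
  rewrite /mxtrace big_distrr; apply: eq_bigr => i _.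
  rewrite f_sum raddf_sum (sum_single (a:=i)) /=; last first.
    by move=> j hj; rewrite fZ mxtraceZ hd eq_sym (negbTE hj) mulr0n mulr0.
  by rewrite fZ mxtraceZ hd eqxx mulr1n mulrC.
exists c; split=> //; apply/eqP => c0.
case: hf => [[g _ fg]] _ _ _.
have := htr (g (delta_mx 0 0)); rewrite fg tr_delta00 c0 mul0r => /eqP.
by rewrite oner_eq0.
Qed.

End Iso.

Section Model.
Variable K : fieldType.
Variable d : nat.
Local Notation n := d.+1.

Definition ninj (t : nat -> K) :=
  forall a b, (a <= d)%N -> (b <= d)%N -> t a = t b -> a = b.

Lemma lag_vanish (t : nat -> K) i j : (j <= d)%N -> j != i -> (lag d t i).[t j] = 0.
Proof.
move=> jd ji; rewrite lag_horner (bigD1 (Ordinal (jd : (j < n)%N))) //=.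
by rewrite subrr mulr0 mul0r.
Qed.

Lemma lag_one (t : nat -> K) i : ninj t -> (i <= d)%N -> (lag d t i).[t i] = 1.
Proof.
move=> ht id; rewrite lag_horner big1 // => j ji; rewrite mulVf // subr_eq0.
apply/eqP => /ht; rewrite id -ltnS ltn_ord => /(_ isT isT) e.
by move: ji; rewrite e eqxx.
Qed.

Lemma Es0_rowsupp (t ph : nat -> K) : ninj t ->
  forall k l : 'I_n, k != ord0 -> prim_idem (ubd d t ph) t 0 k l = 0.
Proof.
move=> ht k l hk; rewrite prim_idemE (row_kill ph ht (erefl _)) // => r /andP[h1 h2].
apply: lag_vanish => //; apply: contraTneq h1 => ->.
by rewrite -ltnNge lt0n.
Qed.

Lemma trmxX (M : 'M[K]_n) i : (M^T) ^+ i = (M ^+ i)^T.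
Proof.
elim: i => [|i IH]; first by rewrite !expr0 trmx1.
by rewrite exprS IH exprSr -!mulmxE trmx_mul.
Qed.

Lemma ninj_rev (t : nat -> K) : ninj t -> ninj (fun m => t (d - m)%N).
Proof.
move=> ht a b ha hb /ht; rewrite !leq_subr => /(_ isT isT) e.
by move: e ha hb; lia.
Qed.

Lemma E0_colsupp (t ph : nat -> K) : ninj t ->
  forall l k : 'I_n, k != ord0 -> prim_idem ((ubd d t ph)^T) t 0 l k = 0.
Proof.
move=> ht l k hk; rewrite prim_idemE -horner_mx_tr mxE.
rewrite (row_kill ph ht (erefl _)) // => r /andP[h1 h2].
apply: lag_vanish => //; apply: contraTneq h1 => ->.
by rewrite -ltnNge lt0n.
Qed.

Lemma E0_rowsupp_d (t ph : nat -> K) : ninj t ->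
  forall k l : 'I_n, k != ord_max ->
  prim_idem ((ubd d (fun m => t (d - m)%N) ph)^T) t 0 k l = 0.
Proof.
move=> ht k l hk; rewrite prim_idemE -horner_mx_tr mxE.
have hkd : (k < d)%N.
  by rewrite ltn_neqAle -ltnS ltn_ord andbT; apply: contra hk => /eqP e;
     apply/eqP/val_inj.
rewrite (col_kill ph (ninj_rev ht) (erefl _)) // => r hr.
by apply: lag_vanish; rewrite ?leq_subr // subn_eq0 -ltnNge (leq_ltn_trans hr).
Qed.

Lemma Xr0 (ts t : nat -> K) (ph : nat -> K) : ninj ts ->
  forall (i r : 'I_n),
  (prim_idem (ubd d ts ph) ts i * ((ubd d t (fun _ => 1))^T) ^+ i) r ord0 =
  prim_idem (ubd d ts ph) ts i r i.
Proof.
move=> hts i r; rewrite -mulmxE mxE (sum_single (a:=i)).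
  rewrite trmxX mxE.
  have [_ ->] := ubd_pow d t (fun _ => 1) i; last by [].
  by rewrite big1 ?mulr1.
move=> j hj; rewrite trmxX mxE.
case: (ltngtP j i) => hji.
- rewrite prim_idemE (col_kill ph hts (erefl _)) ?mul0r // => r' hr'.
  by apply: lag_vanish; rewrite ?ltn_eqF ?(leq_ltn_trans hr') //
       (leq_trans hr') // (leq_trans (ltnW hji)) // -ltnS ltn_ord.
- by have [h _] := ubd_pow d t (fun _ => 1) i; rewrite h ?mulr0.
- by move: hj; rewrite -val_eqE /= hji eqxx.
Qed.

Lemma M1 (th ths ph : nat -> K) : ninj th -> ninj ths -> forall i : 'I_n,
  let U := ubd d ths ph in let L := (ubd d th (fun _ => 1))^T in
  \tr (prim_idem U ths i * L ^+ i * prim_idem U ths 0 * prim_idem L th 0) =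
  prim_idem U ths i ord0 i * \tr (prim_idem U ths 0 * prim_idem L th 0).
Proof.
move=> hth hths i U L.
rewrite -!mulmxE (tr_GL2 _ (Es0_rowsupp ph hths) (E0_colsupp _ hth)).
rewrite -[prim_idem U ths 0]mul1mx (tr_GL2 _ (Es0_rowsupp ph hths) (E0_colsupp _ hth)).
by rewrite mul1mx mulmxE Xr0 // [1%:M _ _]mxE eqxx mul1r.
Qed.

Lemma Es_rank1 (ths ph : nat -> K) : ninj ths -> forall i r : 'I_n,
  prim_idem (ubd d ths ph) ths i r ord_max =
  prim_idem (ubd d ths ph) ths i r i * prim_idem (ubd d ths ph) ths i i ord_max.
Proof.
move=> hths i r; rewrite !prim_idemE.
case: (leqP r i) => hri.
  rewrite -(rank1 ph hths (p := lag d ths i)) ?lag_one ?mulr1 //.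
  - by rewrite -ltnS ltn_ord.
  - by rewrite hri -ltnS ltn_ord.
  - by move=> m /andP[_ h] hm; apply: lag_vanish.
have [h1 _] := horner_ubd_trig d ths ph (lag d ths i).
rewrite [X in _ = X * _]h1 // mul0r (row_kill ph hths (erefl _)) // => m /andP[h2 h3].
by apply: lag_vanish => //; rewrite gtn_eqF // (leq_trans hri).
Qed.

Lemma M2 (th ths ph : nat -> K) : ninj th -> ninj ths -> forall i : 'I_n,
  let U := ubd d ths ph in let L := (ubd d (fun m => th (d - m)%N) (fun _ => 1))^T in
  prim_idem U ths 0 ord0 ord_max * \tr (prim_idem U ths i * prim_idem L th 0) =
  prim_idem U ths i i ord_max *
  \tr (prim_idem U ths i * L ^+ i * prim_idem U ths 0 * prim_idem L th 0).
Proof.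
move=> hth hths i U L.
rewrite -!mulmxE (tr_GL1 _ (Es0_rowsupp ph hths) (E0_rowsupp_d _ hth)).
rewrite (tr_GL3 _ (E0_rowsupp_d _ hth)) mulrCA; congr (_ * _).
rewrite !mxE big_distrr /=; apply: eq_bigr => r _.
rewrite mulmxE Xr0 // Es_rank1 // /U; ring.
Qed.

Lemma Es_cornerW (ths ph : nat -> K) : ninj ths -> forall i : 'I_n,
  prim_idem (ubd d ths ph) ths i ord0 i =
  (\prod_(1 <= r < i.+1) ph r) / \prod_(0 <= r < i.+1 | r != i) (ths i - ths r).
Proof.
move=> hths i; rewrite prim_idemE (corner ph hths (erefl _) (s:=i)).
- by rewrite lag_one ?mulr1 // -ltnS ltn_ord.
- by rewrite leqnn.
- move=> r /andP[_ h] hr; apply: lag_vanish => //.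
  by rewrite (leq_trans h) // -ltnS ltn_ord.
Qed.

Lemma Es_cornerZ (ths ph : nat -> K) : ninj ths -> forall i : 'I_n,
  prim_idem (ubd d ths ph) ths i i ord_max =
  (\prod_(i.+1 <= r < d.+1) ph r) / \prod_(i <= r < d.+1 | r != i) (ths i - ths r).
Proof.
move=> hths i; rewrite prim_idemE (corner ph hths (erefl _) (s:=i)).
- by rewrite lag_one ?mulr1 // -ltnS ltn_ord.
- by rewrite leqnn -ltnS ltn_ord.
- by move=> r /andP[_ h] hr; apply: lag_vanish.
Qed.

Lemma prod_nat_neq0 (F : nat -> K) a b (P : pred nat) :
  (forall r, (a <= r < b)%N -> P r -> F r != 0) ->
  \prod_(a <= r < b | P r) F r != 0.
Proof.
move=> h; rewrite prodf_seq_neq0; apply/allP => r; rewrite mem_index_iota => hr.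
by apply/implyP; apply: h.
Qed.

Lemma T0_neq0 (th ths ph : nat -> K) : ninj th -> ninj ths ->
  (forall j, (1 <= j <= d)%N -> ph j != 0) ->
  \tr (prim_idem (ubd d ths ph) ths 0 *
       prim_idem (ubd d (fun m => th (d - m)%N) (fun _ => 1))^T th 0) != 0.
Proof.
move=> hth hths hph.
set U := ubd d ths ph; set L := (ubd d (fun m => th (d - m)%N) (fun _ => 1))^T.
rewrite -[prim_idem U ths 0]mul1mx -mulmxE.
rewrite (tr_GL1 _ (Es0_rowsupp ph hths) (E0_rowsupp_d _ hth)) mulmx1.
rewrite mulf_neq0 //.
  rewrite (Es_cornerZ ph hths ord0) mulf_neq0 // ?invr_eq0.
    by apply: prod_nat_neq0 => r /andP[h1 h2] _; apply: hph; rewrite h1 -ltnS.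
  apply: prod_nat_neq0 => r /andP[_ h2] h3; rewrite subr_eq0; apply/eqP => /hths.
  move=> /(_ isT); rewrite -ltnS h2 => /(_ isT) e; by move: h3; rewrite -e.
rewrite /L prim_idemE -horner_mx_tr mxE.
rewrite (corner _ (ninj_rev hth) (erefl _) (s:=d)) /=; last 2 first.
- by rewrite leqnn.
- move=> r h hr; apply: lag_vanish; rewrite ?leq_subr //.
  by rewrite subn_eq0 -ltnNge ltn_neqAle hr h.
rewrite subnn lag_one // ?mulr1 // mulf_neq0 // ?invr_eq0.
  by apply: prod_nat_neq0 => *; apply: oner_neq0.
apply: prod_nat_neq0 => r /andP[_ h2] h3; rewrite subr_eq0; apply/eqP => /hth.
move=> /(_ isT); rewrite leq_subr => /(_ isT) e; apply/negP: h3; rewrite negbK; apply/eqP; move: h2 e; lia.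
Qed.

End Model.

Section Fin.
Variable K : fieldType.
Variable d : nat.
Local Notation n := d.+1.

Lemma lbd_eq (th : nat -> K) :
  \matrix_(i, j) (if val i == val j then th i
                  else if val i == (val j).+1 then 1 else 0) =
  (ubd d th (fun _ => 1))^T :> 'M[K]_n.
Proof.
apply/matrixP => i j; rewrite !mxE.
case: (eqVneq i j) => [->|ne]; first by rewrite eqxx.
have -> : (val i == val j) = false by apply/negbTE; rewrite val_eqE.
have -> : (val j == val i) = false by apply/negbTE; rewrite val_eqE eq_sym.
by [].
Qed.

Lemma ninj_of (t : nat -> K) : (forall i j : 'I_n, t i = t j -> i = j) -> ninj d t.
Proof.
move=> h a b ha hb e.
by have := h (Ordinal (ha : (a < n)%N)) (Ordinal (hb : (b < n)%N)) e => /(congr1 val).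
Qed.

Lemma prod_rev (G : nat -> K) m : (m <= d)%N ->
  \prod_(h < m) G (d - h)%N = \prod_((d - m).+1 <= r < d.+1) G r.
Proof.
move=> md; rewrite -(big_mkord xpredT (fun h => G (d - h)%N)) big_nat_rev /=.
rewrite -[(d - m).+1]add0n big_addn.
have -> : (d.+1 - (d - m).+1)%N = m by lia.
by apply: eq_big_nat => h /andP[_ hh]; congr G; lia.
Qed.

Lemma prod_drop_cond (F : nat -> K) a b :
  \prod_(a <= r < b | r != b) F r = \prod_(a <= r < b) F r.
Proof.
rewrite big_nat_cond [RHS]big_nat_cond; apply: eq_bigl => r.
by case/boolP: (a <= r < b)%N => //= /andP[_ h]; rewrite ltn_eqF.
Qed.

End Fin.

Unset Implicit Arguments. Set Strict Implicit.
Theorem theorem17p10 (K : fieldType) (d : nat) (A As : 'M[K]_d.+1)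
  (th ths phi phi2 : nat -> K) :
  leonard_system A As th ths ->
  first_split_seq A As th ths phi ->
  first_split_seq A As (fun i => th (d - i)%N) ths phi2 ->
  forall i : nat, (i <= d)%N ->
    k_LS A As th ths i =
      (\prod_(1 <= j < i.+1) phi j) / (\prod_(1 <= j < i.+1) phi2 j) *
      ((eta_s d ths d).[ths 0%N] /
       ((tau_s ths i).[ths i] * (eta_s d ths (d - i)).[ths i])).
Proof.
move=> [[hth _] [hths _] _ _] [hphi [f1 [iso1 [fA1 fAs1]]]]
       [hphi2 [f2 [iso2 [fA2 fAs2]]]] i hi.
have nth := ninj_of hth; have nths := ninj_of hths.
rewrite (@lbd_eq K d th) in fA1. rewrite (@lbd_eq K d (fun m => th (d - m)%N)) in fA2.
set io : 'I_d.+1 := Ordinal (hi : (i < d.+1)%N).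
set E0 := prim_idem A th 0; set Es := prim_idem As ths.
set T0 := \tr (Es 0%N * E0); set T := \tr (Es i * E0).
set T1 := \tr (Es i * A ^+ i * Es 0%N * E0).
have [c1 [c1n hc1]] := f_trace iso1.
have [c2 [c2n hc2]] := f_trace iso2.
have F1 : T1 = prim_idem (ubd d ths phi) ths io ord0 io * T0.
  apply: (mulfI c1n); rewrite -hc1 mulrCA -hc1 /T1 /T0 !(fM iso1) (fX iso1).
  rewrite /Es /E0 !(f_prim_idem iso1) fA1 fAs1.
  exact: (M1 phi nth nths io).
have F2 : prim_idem (ubd d ths phi2) ths 0 ord0 ord_max * T =
          prim_idem (ubd d ths phi2) ths io io ord_max * T1.
  apply: (mulfI c2n); rewrite mulrCA -hc2 [RHS]mulrCA -hc2.
  rewrite /T1 /T !(fM iso2) (fX iso2) /Es /E0 !(f_prim_idem iso2) fA2 fAs2.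
  exact: (M2 phi2 nth nths io).
have F3 : T0 != 0.
  have := T0_neq0 nth nths hphi2.
  have -> : \tr (prim_idem (ubd d ths phi2) ths 0 *
       prim_idem (ubd d (fun m => th (d - m)%N) (fun _ => 1))^T th 0) = c2 * T0.
    by rewrite -hc2 (fM iso2) !(f_prim_idem iso2) fA2 fAs2.
  by rewrite mulf_eq0 negb_or => /andP[].
have -> : k_LS A As th ths i = T / T0.
  by rewrite /k_LS /nu_LS mulrC /T /T0 /Es /E0 -!mulmxE [X in _ / X]mxtrace_mulC.
set W := prim_idem (ubd d ths phi) ths io ord0 io in F1.
set Zi := prim_idem (ubd d ths phi2) ths io io ord_max in F2.
set Z0 := prim_idem (ubd d ths phi2) ths 0 ord0 ord_max in F2.
set P1 := \prod_(1 <= j < i.+1) phi j.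
set P2a := \prod_(1 <= j < i.+1) phi2 j.
set P2b := \prod_(i.+1 <= j < d.+1) phi2 j.
set Da := \prod_(0 <= r < i) (ths i - ths r).
set Db := \prod_(i.+1 <= r < d.+1) (ths i - ths r).
set Dc := \prod_(1 <= r < d.+1) (ths 0%N - ths r).
have dn : forall a b : nat, (a <= d)%N -> (b <= d)%N -> a != b -> ths a - ths b != 0.
  move=> a b ha hb ab; rewrite subr_eq0; apply/eqP => /nths.
  by rewrite ha hb => /(_ isT isT) e; move: ab; rewrite e eqxx.
have P2an : P2a != 0.
  by apply: prod_nat_neq0 => r /andP[h1 h2] _; apply: hphi2; rewrite h1 -ltnS (leq_trans h2).
have P2bn : P2b != 0.
  by apply: prod_nat_neq0 => r /andP[h1 h2] _; apply: hphi2; rewrite (leq_trans _ h1) //= -ltnS.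
have Dan : Da != 0.
  apply: prod_nat_neq0 => r /andP[h1 h2] _; apply: dn => //.
  - by rewrite (leq_trans (ltnW h2)).
  - by rewrite gtn_eqF.
have Dbn : Db != 0.
  apply: prod_nat_neq0 => r /andP[h1 h2] _; apply: dn => //.
  by rewrite ltn_eqF.
have Dcn : Dc != 0.
  apply: prod_nat_neq0 => r /andP[h1 h2] _; apply: dn => //.
  by rewrite ltn_eqF.
have eW : W = P1 / Da.
  rewrite /W (Es_cornerW phi nths io) /= prod_last_cond // eqxx mulr1.
  by rewrite prod_drop_cond.
have eZi : Zi = P2b / Db.
  rewrite /Zi (Es_cornerZ phi2 nths io) /= (big_ltn_cond (m:=i)) //= eqxx /=.
  congr (_ / _); rewrite big_nat_cond [RHS]big_nat_cond; apply: eq_bigl => r.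
  by case/boolP: (i.+1 <= r < d.+1)%N => //= /andP[h _]; rewrite gtn_eqF.
have eZ0 : Z0 = P2a * P2b / Dc.
  rewrite /Z0 (Es_cornerZ phi2 nths ord0) /= (big_ltn_cond (m:=0)) //=.
  rewrite (big_cat_nat (n := i.+1)) //=; congr (_ / _).
  rewrite big_nat_cond [RHS]big_nat_cond; apply: eq_bigl => r.
  by case/boolP: (1 <= r < d.+1)%N => //= /andP[h _]; rewrite gtn_eqF.
have etau : (tau_s ths i).[ths i] = Da.
  rewrite /tau_s horner_prod /Da big_mkord; apply: eq_bigr => j _.
  by rewrite hornerXsubC.
have eeta1 : (eta_s d ths (d - i)).[ths i] = Db.
  rewrite /eta_s horner_prod.
  under eq_bigr do rewrite hornerXsubC.
  by rewrite (prod_rev (fun r => ths i - ths r)) ?leq_subr // subKn.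
have eeta2 : (eta_s d ths d).[ths 0%N] = Dc.
  rewrite /eta_s horner_prod.
  under eq_bigr do rewrite hornerXsubC.
  by rewrite (prod_rev (fun r => ths 0%N - ths r)) // subnn.
have Z0n : Z0 != 0 by rewrite eZ0 !mulf_neq0 ?invr_eq0.
rewrite etau eeta1 eeta2 -[T](mulKf Z0n) F2 F1 eZi eW eZ0.
by field; rewrite ?F3 ?P2an ?P2bn ?Dan ?Dbn ?Dcn.
Qed.
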